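(* Let $K\ge3$, $L\in\{3,\dots,K\}$, and $p_1>p_2\ge\cdots\ge p_K>0$ with $\sum_kp_k=1$. Let $n_1\ge n_2\ge\cdots\ge n_{L-1}\ge1$ and $n$ be integers with $0\le n-\sum_{t=1}^{L-1}n_t\le (K-L+1)\,n_{L-1}$. For every tuple $(i_1,\dots,i_{L-1})$ of distinct indices in $\{1,\dots,K\}$, let $I=\{i_1,\dots,i_{L-1}\}$, $\bar n=n-\sum_{t=1}^{L-1}n_t$, $$S_{i_1,\dots,i_{L-1}}:=\sum_{\mathbf r}\frac{\bar n!}{\prod_{j\notin I}r_j!}\prod_{j\notin I}p_j^{r_j},$$ the sum over $\mathbf r=(r_j)_{j\notin I}$ of nonnegative integers with $\sum_{j\notin I}r_j=\bar n$ and $\max_{j\notin I}r_j\le n_{L-1}$, and $A_{i_1,\dots,i_{L-1}}:=S_{i_1,\dots,i_{L-1}}\prod_{t=1}^{L-1}p_{i_t}^{n_t}$. Then $$\max_{i_2,\dots,i_{L-1}}A_{1,i_2,\dots,i_{L-1}}=A_{1,2,\dots,L-1},\qquad \max_{i_1\ne1}A_{i_1,i_2,\dots,i_{L-1}}=A_{2,1,3,\dots,L-1},$$ where the maxima are over tuples of distinct indices (the first with $i_1=1$ fixed, the second over all tuples with $i_1\ne1$).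
   Context: $n_1,\dots,n_{L-1}$ play the role of the $L-1$ largest occurrence counts among $n$ i.i.d. samples from $(p_1,\dots,p_K)$, so the remaining $\bar n$ samples fall on the other answers each at most $n_{L-1}$ times. *)

(* Defs.v *)
(* Indices are 0-based: answer k in the paper is the ordinal
   of value k-1 in 'I_K; position t in the tuple (1..L-1) is value t-1. *)
From HB Require Import structures.
From mathcomp Require Import all_boot all_order all_algebra.
Set Implicit Arguments. Unset Strict Implicit. Unset Printing Implicit Defensive.
Import Order.TTheory GRing.Theory Num.Theory.
Local Open Scope ring_scope.

Section Defs.
Variables (R : realFieldType) (K L : nat) (p : 'I_K -> R) (nn : nat -> nat) (n : nat).

Definition nlast : nat := nn (L.-2).

Definition nbar : nat := (n - \sum_(t < L.-1) nn t)%N.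

Definition idxset (i : 'I_(L.-1) -> 'I_K) : {set 'I_K} := [set i t | t in 'I_(L.-1)].

(* S_{i}: sum over r = (r_j)_{j notin I}, 0 <= r_j <= n_{L-1}, sum r_j = nbar.
   The vector r is encoded as a function on all of 'I_K vanishing on I. *)
Definition Ssum (i : 'I_(L.-1) -> 'I_K) : R :=
  \sum_(r : {ffun 'I_K -> 'I_(nlast.+1)} |
          [forall j, (j \in idxset i) ==> (val (r j) == 0%N)] &&
          ((\sum_(j | j \notin idxset i) val (r j))%N == nbar))
     ((nbar`!)%:R / \prod_(j | j \notin idxset i) ((val (r j))`!)%:R)
       * \prod_(j | j \notin idxset i) p j ^+ val (r j).

Definition Aval (i : 'I_(L.-1) -> 'I_K) : R :=
  Ssum i * \prod_(t < L.-1) p (i t) ^+ nn t.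

End Defs.

(* Main.v *)
Require Import Defs.
From HB Require Import structures.
From mathcomp Require Import all_boot perm all_order all_algebra.
From mathcomp Require Import ring zify.
Import Order.TTheory GRing.Theory Num.Theory.
Local Open Scope ring_scope.

Lemma powswap (R : realFieldType) (x y : R) (r m : nat) :
  0 <= x -> x <= y -> (r <= m)%N -> y ^+ r * x ^+ m <= x ^+ r * y ^+ m.
Proof.
move=> x0 xy rm; have y0 : 0 <= y by apply: le_trans xy.
rewrite -(subnK rm) !exprD.
rewrite (_ : y ^+ r * (x ^+ (m - r) * x ^+ r) = (x ^+ r * y ^+ r) * x ^+ (m - r)); last by ring.
rewrite (_ : x ^+ r * (y ^+ (m - r) * y ^+ r) = (x ^+ r * y ^+ r) * y ^+ (m - r)); last by ring.
apply: ler_wpM2l; first by rewrite mulr_ge0 // exprn_ge0.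
by apply: lerXn2r; rewrite ?nnegrE.
Qed.

Lemma memI' (K L : nat) (i : 'I_L.-1 -> 'I_K) (a b j : 'I_K) :
  (j \in idxset (fun s => tperm a b (i s))) = (tperm a b j \in idxset i).
Proof.
apply/imsetP/imsetP => [[s _ ->]|[s _ e]].
  by exists s => //; rewrite tpermK.
by exists s => //; rewrite -e tpermK.
Qed.

Lemma big_swapI (T : Type) (idx : T) (op : Monoid.com_law idx) (K L : nat)
  (i : 'I_L.-1 -> 'I_K) (a b : 'I_K) (F : 'I_K -> T) :
  \big[op/idx]_(j | j \notin idxset (fun s => tperm a b (i s))) F j =
  \big[op/idx]_(j | j \notin idxset i) F (tperm a b j).
Proof.
rewrite (reindex_inj (@perm_inj _ (tperm a b))).
by apply: eq_bigl => j; rewrite memI' tpermK.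
Qed.

Lemma Aval_swap (R : realFieldType) (K L : nat) (p : 'I_K -> R) (nn : nat -> nat) (n : nat)
  (i : 'I_L.-1 -> 'I_K) (a b : 'I_K) :
  Aval p nn n (fun s => tperm a b (i s)) =
  \sum_(r : {ffun 'I_K -> 'I_((nlast L nn).+1)} |
          [forall j, (j \in idxset i) ==> (val (r j) == 0%N)] &&
          ((\sum_(j | j \notin idxset i) val (r j))%N == nbar L nn n))
     ((nbar L nn n)`!%:R / \prod_(j | j \notin idxset i) ((val (r j))`!)%:R)
       * (\prod_(j | j \notin idxset i) p (tperm a b j) ^+ val (r j)
          * \prod_(t < L.-1) p (tperm a b (i t)) ^+ nn t).
Proof.
rewrite /Aval /Ssum mulr_suml.
rewrite (reindex_inj (h := fun r : {ffun 'I_K -> 'I_((nlast L nn).+1)} => [ffun j => r (tperm a b j)])); last first.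
  move=> r1 r2 /ffunP e; apply/ffunP=> j; have := e (tperm a b j).
  by rewrite !ffunE tpermK.
apply: eq_big => r.
  congr andb.
    apply/forallP/forallP => H j.
      by have := H (tperm a b j); rewrite memI' ffunE tpermK.
    by rewrite memI' ffunE; exact: H.
  rewrite big_swapI; congr (_ == _); apply: eq_bigr => j _.
  by rewrite ffunE tpermK.
move=> _; rewrite !mulrA; congr (_ * _ * _ * _).
  congr (_^-1); rewrite big_swapI; apply: eq_bigr => j _; by rewrite ffunE tpermK.
rewrite big_swapI; apply: eq_bigr => j _; by rewrite ffunE tpermK.
Qed.

Lemma Aval_unfold (R : realFieldType) (K L : nat) (p : 'I_K -> R) (nn : nat -> nat) (n : nat)
  (i : 'I_L.-1 -> 'I_K) :
  Aval p nn n i =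
  \sum_(r : {ffun 'I_K -> 'I_((nlast L nn).+1)} |
          [forall j, (j \in idxset i) ==> (val (r j) == 0%N)] &&
          ((\sum_(j | j \notin idxset i) val (r j))%N == nbar L nn n))
     ((nbar L nn n)`!%:R / \prod_(j | j \notin idxset i) ((val (r j))`!)%:R)
       * (\prod_(j | j \notin idxset i) p j ^+ val (r j)
          * \prod_(t < L.-1) p (i t) ^+ nn t).
Proof. by rewrite /Aval /Ssum mulr_suml; apply: eq_bigr => r _; rewrite mulrA. Qed.

Lemma big2 (R : comRingType) (m : nat) (F : 'I_m -> R) (t u : 'I_m) : u != t ->
  \prod_(s < m) F s = F t * (F u * \prod_(s < m | (s != t) && (s != u)) F s).
Proof.
move=> ut; rewrite (bigD1 t) //=; congr (_ * _).
by rewrite (bigD1 u) //=; congr (_ * _); apply: eq_bigl => s; rewrite andbC.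
Qed.

Lemma step (R : realFieldType) (K L : nat) (p : 'I_K -> R) (nn : nat -> nat) (n : nat)
  (i : 'I_L.-1 -> 'I_K) (t : 'I_L.-1) (b : 'I_K) :
  (forall j, 0 < p j) ->
  (forall s t : nat, (s <= t)%N -> (t < L.-1)%N -> (nn t <= nn s)%N) ->
  injective i -> i t != b -> (forall s : 'I_L.-1, (s < t)%N -> i s != b) ->
  p (i t) <= p b ->
  Aval p nn n i <= Aval p nn n (fun s => tperm (i t) b (i s)).
Proof.
move=> p0 nmono iinj ab bs pab.
rewrite Aval_swap Aval_unfold; apply: ler_sum => r /andP[Hz Hs].
apply: ler_wpM2l.
  by rewrite divr_ge0 // prodr_ge0 // => j _; rewrite ler0n.
have pp : forall (P : pred 'I_K) (F : 'I_K -> nat), 0 <= \prod_(j | P j) p j ^+ F j.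
  by move=> P F; apply: prodr_ge0 => j _; rewrite exprn_ge0 // ltW.
have pq : forall (P : pred 'I_L.-1), 0 <= \prod_(s | P s) p (i s) ^+ nn s.
  by move=> P; apply: prodr_ge0 => j _; rewrite exprn_ge0 // ltW.
set a := i t.
have aI : a \in idxset i by apply/imsetP; exists t.
have ia : forall s, s != t -> a != i s.
  by move=> s st; apply/eqP => /iinj e; rewrite e eqxx in st.
have ntI : forall j, j \notin idxset i -> a != j.
  by move=> j jI; apply: contraNneq jI => <-.
case: (boolP (b \in idxset i)) => bI.
  case/imsetP: (bI) => u _ bu.
  have ut : u != t by apply: contraNneq ab => e; rewrite /a bu e.
  have tu : (t < u)%N.
    rewrite ltnNge leq_eqVlt negb_or; apply/andP; split.
      by apply: contraNneq ut => e; apply/eqP/val_inj.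
    by apply/negP => /bs; rewrite bu eqxx.
  have -> : \prod_(j | j \notin idxset i) p (tperm a b j) ^+ val (r j)
          = \prod_(j | j \notin idxset i) p j ^+ val (r j).
    apply: eq_bigr => j jI; rewrite tpermD ?ntI //.
    by apply: contraNneq jI => <-.
  apply: ler_wpM2l; first exact: pp.
  rewrite (@big2 _ _ _ _ _ ut) [X in _ <= X](@big2 _ _ _ _ _ ut).
  rewrite tpermL -bu tpermR.
  have -> : \prod_(s < L.-1 | (s != t) && (s != u)) p (tperm a b (i s)) ^+ nn s
          = \prod_(s < L.-1 | (s != t) && (s != u)) p (i s) ^+ nn s.
    apply: eq_bigr => s /andP[st su]; rewrite tpermD //.
      by apply: ia.
    by rewrite bu; apply: contra su => /eqP /iinj ->.
  rewrite !mulrA; apply: ler_wpM2r; first exact: pq.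
  rewrite mulrC [X in _ <= X]mulrC; apply: powswap => //; first exact: ltW.
  by apply: nmono; [exact: ltnW | exact: ltn_ord].
rewrite [in X in X <= _](bigD1 b) //= [in X in _ <= X](bigD1 b) //= tpermR.
have -> : \prod_(j | (j \notin idxset i) && (j != b)) p (tperm a b j) ^+ val (r j)
        = \prod_(j | (j \notin idxset i) && (j != b)) p j ^+ val (r j).
  by apply: eq_bigr => j /andP[jI jb]; rewrite tpermD // ?ntI // eq_sym.
rewrite [in X in X <= _](bigD1 t) //= [in X in _ <= X](bigD1 t) //= tpermL.
have -> : \prod_(s < L.-1 | s != t) p (tperm a b (i s)) ^+ nn s
        = \prod_(s < L.-1 | s != t) p (i s) ^+ nn s.
  apply: eq_bigr => s st; rewrite tpermD //.
    by apply: ia.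
  by apply: contraNneq bI => ->; apply/imsetP; exists s.
rewrite mulrACA [X in _ <= X]mulrACA; apply: ler_wpM2r.
  by rewrite mulr_ge0 ?pp ?pq.
apply: powswap => //; first exact: ltW.
apply: leq_trans (_ : nlast L nn <= nn t)%N.
  by rewrite -ltnS ltn_ord.
rewrite /nlast; apply: nmono.
  by have := ltn_ord t; lia.
by have := ltn_ord t; lia.
Qed.

Lemma Aval_ext (R : realFieldType) (K L : nat) (p : 'I_K -> R) (nn : nat -> nat) (n : nat)
  (i j : 'I_L.-1 -> 'I_K) : i =1 j -> Aval p nn n i = Aval p nn n j.
Proof.
move=> e; rewrite /Aval /Ssum.
have -> : idxset i = idxset j by apply: eq_imset.
by congr (_ * _); apply: eq_bigr => t _; rewrite e.
Qed.

Lemma prefix_max (R : realFieldType) (K L : nat) (p : 'I_K -> R) (nn : nat -> nat) (n : nat)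
  (g : 'I_L.-1 -> 'I_K) (k0 : nat) :
  (forall j, 0 < p j) ->
  (forall s t : nat, (s <= t)%N -> (t < L.-1)%N -> (nn t <= nn s)%N) ->
  injective g -> (k0 <= L.-1)%N ->
  (forall t : 'I_L.-1, (k0 <= t)%N -> forall a,
      (forall s : 'I_L.-1, (s <= t)%N -> a != g s) -> p a <= p (g t)) ->
  forall i, injective i -> (forall s : 'I_L.-1, (s < k0)%N -> i s = g s) ->
  Aval p nn n i <= Aval p nn n g.
Proof.
move=> p0 nmono ginj k0L Hg.
suff H : forall d k, (k + d = L.-1)%N -> (k0 <= k)%N -> forall i, injective i ->
    (forall s : 'I_L.-1, (s < k)%N -> i s = g s) -> Aval p nn n i <= Aval p nn n g.
  by move=> i iinj hi; exact: (H (L.-1 - k0)%N k0 (subnKC k0L) (leqnn _) i iinj hi).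
elim=> [|d IH] k kd k0k i iinj hi.
  rewrite (@Aval_ext _ _ _ _ _ _ i g) // => s; apply: hi.
  by rewrite addn0 in kd; rewrite kd ltn_ord.
have kL : (k < L.-1)%N by lia.
pose t := Ordinal kL.
case: (eqVneq (i t) (g t)) => e.
  apply: (IH k.+1) => //; try lia.
  move=> s; rewrite ltnS leq_eqVlt => /orP[/eqP sk|sk]; last exact: hi.
  by have -> : s = t by apply: val_inj.
have tI : forall s : 'I_L.-1, (s < t)%N -> i s = g s by move=> s; apply: hi.
have neq : forall s : 'I_L.-1, (s < t)%N -> s != t.
  by move=> s st; apply/eqP => e'; rewrite e' ltnn in st.
apply: le_trans (@step _ _ _ _ _ n i t (g t) p0 nmono iinj e _ _) _.
- move=> s st; rewrite tI //; apply/eqP => /ginj e'.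
  by have := neq s st; rewrite e' eqxx.
- apply: Hg => // s; rewrite leq_eqVlt => /orP[/eqP st|st].
    by have -> : s = t by apply: val_inj.
  rewrite -tI //; apply/eqP => /iinj e'.
  by have := neq s st; rewrite e' eqxx.
apply: (IH k.+1) => //; try lia.
- by move=> x y /perm_inj /iinj.
move=> s; rewrite ltnS leq_eqVlt => /orP[/eqP sk|sk].
  have -> : s = t by apply: val_inj.
  by rewrite tpermL.
rewrite tpermD; first exact: hi.
  apply/eqP => /iinj e'; have := neq s sk; by rewrite e' eqxx.
rewrite hi //; apply/eqP => /ginj e'; have := neq s sk; by rewrite e' eqxx.
Qed.

Lemma finj (a b : nat) :
  (if a == 0%N then 1 else if a == 1%N then 0 else a)%N =
  (if b == 0%N then 1 else if b == 1%N then 0 else b)%N -> a = b.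
Proof. by case: a => [|[|a]]; case: b => [|[|b]] //= ->. Qed.

Theorem lemma2 (R : realFieldType) (K L : nat) (p : 'I_K -> R)
    (nn : nat -> nat) (n : nat) :
  (3 <= K)%N -> (3 <= L)%N -> (L <= K)%N ->
  (* p_1 > p_2 >= ... >= p_K > 0, sum = 1 *)
  (forall i j : 'I_K, val i = 0%N -> val j = 1%N -> p j < p i) ->
  (forall i j : 'I_K, (val i <= val j)%N -> p j <= p i) ->
  (forall j : 'I_K, 0 < p j) ->
  \sum_(j < K) p j = 1 ->
  (* n_1 >= ... >= n_{L-1} >= 1 *)
  (forall s t : nat, (s <= t)%N -> (t < L.-1)%N -> (nn t <= nn s)%N) ->
  (1 <= nn L.-2)%N ->
  (* 0 <= n - sum n_t <= (K-L+1) n_{L-1} *)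
  (\sum_(t < L.-1) nn t <= n)%N ->
  (n - \sum_(t < L.-1) nn t <= (K - L + 1) * nn L.-2)%N ->
  (* i0 = (1,2,...,L-1) and i1 = (2,1,3,...,L-1) in 1-based notation *)
  forall i0 i1 : 'I_L.-1 -> 'I_K,
  (forall t, val (i0 t) = val t) ->
  (forall t, val (i1 t) = (if val t == 0%N then 1 else if val t == 1%N then 0 else val t)%N) ->
  (forall i : 'I_L.-1 -> 'I_K, injective i ->
     (forall t, val t = 0%N -> val (i t) = 0%N) ->
     Aval p nn n i <= Aval p nn n i0) /\
  (forall i : 'I_L.-1 -> 'I_K, injective i ->
     (forall t, val t = 0%N -> val (i t) <> 0%N) ->
     Aval p nn n i <= Aval p nn n i1).
Proof.
move=> K3 L3 LK _ pmono p0 _ nmono _ _ _ i0 i1 hi0 hi1.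
have L1 : (1 < L.-1)%N by lia.
split.
  move=> i iinj hi; apply: (@prefix_max _ _ _ _ _ _ i0 1) => //.
  - by move=> x y e; apply/val_inj; rewrite -hi0 e hi0.
  - by lia.
  - move=> t _ a Ha; apply: pmono; rewrite hi0 leqNgt; apply/negP => hat.
    have sL : (val a < L.-1)%N by apply: ltn_trans hat (ltn_ord t).
    have := Ha (Ordinal sL) (ltnW hat).
    have e : i0 (Ordinal sL) = a by apply/val_inj; rewrite hi0.
    by rewrite e eqxx.
  - move=> s s1; have h : val s = 0%N by move: s1; rewrite ltnS leqn0 => /eqP.
    by apply/val_inj; rewrite hi // hi0 h.
move=> i iinj hi.
pose t0 : 'I_L.-1 := Ordinal (ltnW L1).
pose t1 : 'I_L.-1 := Ordinal L1.
have vb1 : val (i1 t0) = 1%N by rewrite hi1.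
have vb0 : val (i1 t1) = 0%N by rewrite hi1.
have ninj : forall x y : 'I_L.-1, x != y -> i1 x != i1 y.
  move=> x y; apply: contra => /eqP /(congr1 val); rewrite !hi1 => e.
  by apply/eqP/val_inj; move: e; apply: finj.
have t01 : t0 != t1 by apply/eqP => /(congr1 val).
have [i' [i'inj [i't0 Hi']]] : exists i' : 'I_L.-1 -> 'I_K,
    injective i' /\ i' t0 = i1 t0 /\ Aval p nn n i <= Aval p nn n i'.
  case: (eqVneq (i t0) (i1 t0)) => e; first by exists i.
  exists (fun s => tperm (i t0) (i1 t0) (i s)); split; last split.
  - by move=> x y /perm_inj /iinj.
  - by rewrite tpermL.
  apply: step => //.
  apply: pmono; rewrite vb1; have := hi t0 erefl; lia.
have [i'' [i''inj [i''t0 [i''t1 Hi'']]]] : exists i'' : 'I_L.-1 -> 'I_K,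
    injective i'' /\ i'' t0 = i1 t0 /\ i'' t1 = i1 t1 /\ Aval p nn n i' <= Aval p nn n i''.
  case: (eqVneq (i' t1) (i1 t1)) => e; first by exists i'.
  exists (fun s => tperm (i' t1) (i1 t1) (i' s)); split; last split; last split.
  - by move=> x y /perm_inj /i'inj.
  - rewrite i't0 tpermD //.
      by rewrite -i't0; apply/eqP => /i'inj /eqP; rewrite eq_sym (negbTE t01).
    by apply: ninj; rewrite eq_sym.
  - by rewrite tpermL.
  apply: step => //.
    move=> s s1; have -> : s = t0 by apply/val_inj; move: s1; rewrite /= ltnS leqn0 => /eqP.
    by rewrite i't0; apply: ninj.
  by apply: pmono; rewrite vb0.
apply: le_trans Hi' (le_trans Hi'' _).
apply: (@prefix_max _ _ _ _ _ _ i1 2) => //.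
- by move=> x y e; apply/eqP/negPn/negP => /ninj; rewrite e eqxx.
- move=> t t2 a Ha; apply: pmono; rewrite hi1.
  case: t t2 Ha => m mL /= t2 Ha.
  case: a Ha => ma maL /= Ha.
  have -> : (m == 0%N) = false by apply/eqP; lia.
  have -> : (m == 1%N) = false by apply/eqP; lia.
  rewrite leqNgt; apply/negP => hat.
  pose v := (if ma == 0%N then 1 else if ma == 1%N then 0 else ma)%N.
  have vL : (v < L.-1)%N.
    by rewrite /v; case: eqP => _; [lia | case: eqP => _; lia].
  have vt : (v <= m)%N by rewrite /v; case: eqP => _; [lia | case: eqP => _; lia].
  have := Ha (Ordinal vL) vt.
  have -> : i1 (Ordinal vL) = Ordinal maL.
    apply/val_inj; rewrite hi1 /= /v.
    by case: ma {maL Ha hat v vL vt} => [|[|ma]].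
  by rewrite eqxx.
- move=> s s2; case: s s2 => m mL /= s2.
  have [hs|hs] : m = 0%N \/ m = 1%N by lia.
    have -> : Ordinal mL = t0 by apply/val_inj.
    by [].
  have -> : Ordinal mL = t1 by apply/val_inj.
  by [].
Qed.
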